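(* Let $r$ and $m$ be positive integers. Then there exist polynomials $F$ and $G$, independent of $n$, of degrees $m$ and $r-1$ respectively, such that for every positive integer $n$, \[ \sum_{1\le i_1\le i_2\le\cdots\le i_{2r}\le n}(-1)^{i_1}\, i_1^{2m}=(-1)^n F\big(n(n+2r)\big)+G\big(n(n+2r)\big). \]
   Context: The left-hand side is the $2r$-fold alternating power sum ${\sum}^{2r}(-1)^n n^{2m}$, where ${\sum}^{s}(-1)^n(n+x)^m$ is defined as $\sum_{1\le i_1\le\cdots\le i_s\le n}(-1)^{i_1}(i_1+x)^m$. *)

(* Defs.v *)
From mathcomp Require Import all_boot all_order all_algebra.
Set Implicit Arguments. Unset Strict Implicit. Unset Printing Implicit Defensive.
Import Order.TTheory GRing.Theory Num.Theory.
Local Open Scope ring_scope.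

(* Iterated sum: for s >= 1,
   iter_sum s f n = \sum_{1 <= i_1 <= i_2 <= ... <= i_s <= n} f i_1,
   computed by summing over the largest index i_s = k:
   iter_sum (s+1) f n = \sum_{k=1}^{n} iter_sum s f k,
   with the convention iter_sum 0 f k = f k (so iter_sum 1 f n = \sum_{i=1}^n f i). *)
Fixpoint iter_sum (s : nat) (f : nat -> rat) (n : nat) : rat :=
  match s with
  | 0 => f n
  | s'.+1 => \sum_(1 <= k < n.+1) iter_sum s' f k
  end.

(* Main.v *)
Require Import Defs.
From mathcomp Require Import all_boot all_order all_algebra.
From mathcomp Require Import ring zify.
Import Order.TTheory GRing.Theory Num.Theory.
Set Implicit Arguments. Unset Strict Implicit. Unset Printing Implicit Defensive.
Local Open Scope ring_scope.

Definition sh (c : rat) (p : {poly rat}) := p \Po ('X + c%:P).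
Definition dif (c : rat) (p : {poly rat}) := p - sh c p.

Lemma hsh c p x : (sh c p).[x] = p.[x + c].
Proof. by rewrite /sh horner_comp !hornerE. Qed.

Lemma size_sh c p : size (sh c p) = size p.
Proof. by rewrite /sh size_comp_poly2 // size_XaddC. Qed.

Lemma lead_sh c p : lead_coef (sh c p) = lead_coef p.
Proof. by rewrite /sh lead_coef_comp ?size_XaddC // lead_coefXaddC expr1n mulr1. Qed.

Lemma shD c p q : sh c (p + q) = sh c p + sh c q.
Proof. by rewrite /sh comp_polyD. Qed.
Lemma shZ c a p : sh c (a *: p) = a *: sh c p.
Proof. by rewrite /sh comp_polyZ. Qed.
Lemma shC c a : sh c a%:P = a%:P.
Proof. by rewrite /sh comp_polyC. Qed.

Lemma dif_MXaddC c q d : dif c (q * 'X + d%:P) = dif c q * 'X - c *: sh c q.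
Proof.
rewrite /dif /sh comp_polyD comp_polyM comp_polyX comp_polyC.
by rewrite -mul_polyC; ring.
Qed.

Lemma lead_MXaddC (q : {poly rat}) d : q != 0 -> lead_coef (q * 'X + d%:P) = lead_coef q.
Proof.
move=> q0; rewrite lead_coefDl ?lead_coefMX // size_mulX //.
by rewrite (leq_ltn_trans (size_polyC_leq1 _)) // ltnS lt0n size_poly_eq0.
Qed.

Lemma K1 c p : (size (dif c p) <= (size p).-1)%N /\
  (dif c p)`_((size p).-2) = - (c * ((size p).-1)%:R) * lead_coef p.
Proof.
elim/poly_ind: p => [|q d [IH1 IH2]].
  by rewrite /dif /sh comp_polyC subrr size_poly0 coef0 lead_coef0 mulr0.
have [->|q0] := eqVneq q 0.
  rewrite mul0r add0r /dif shC subrr size_poly0 coef0; split => //.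
  by rewrite size_polyC; case: (d != 0) => /=; rewrite ?mulr0 ?mul0r ?oppr0.
rewrite dif_MXaddC lead_MXaddC // size_MXaddC (negPf q0) /=.
have sq : (0 < size q)%N by rewrite lt0n size_poly_eq0.
split.
  apply: (leq_trans (size_polyD _ _)).
  rewrite geq_max size_polyN; apply/andP; split.
    have [->|d0] := eqVneq (dif c q) 0; first by rewrite mul0r size_poly0.
    by rewrite size_mulX // -(prednK sq) ltnS.
  by rewrite (leq_trans (size_scale_leq _ _)) // size_sh.
rewrite coefB coefMX coefZ.
have -> : (sh c q)`_(size q).-1 = lead_coef q by rewrite -(lead_sh c) lead_coefE size_sh.
case: (size q) sq IH2 => // n _ IH2 /=.
case: n IH2 => [|n] IH2 /=.
  by rewrite sub0r mulr1 mulNr.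
move: IH2 => /= ->; rewrite -[n.+2]addn1 -[n.+1]addn1 !natrD; ring.
Qed.

Lemma hdif (c : rat) (p : {poly rat}) x : (dif c p).[x] = p.[x] - p.[x + c].
Proof. by rewrite /dif hornerD hornerN hsh. Qed.

Lemma difD (c : rat) (p q : {poly rat}) : dif c (p + q) = dif c p + dif c q.
Proof. rewrite /dif shD; ring. Qed.
Lemma difB (c : rat) (p q : {poly rat}) : dif c (p - q) = dif c p - dif c q.
Proof. rewrite /dif /sh comp_polyB; ring. Qed.
Lemma difZ (c a : rat) (p : {poly rat}) : dif c (a *: p) = a *: dif c p.
Proof. by rewrite /dif shZ scalerBr. Qed.
Lemma difC (c a : rat) : dif c a%:P = 0.
Proof. by rewrite /dif shC subrr. Qed.

Lemma coef_nz_size (p : {poly rat}) i : p`_i != 0 -> (i < size p)%N.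
Proof. by apply: contraR; rewrite -leqNgt => H; rewrite nth_default. Qed.

Lemma size_le_drop (p : {poly rat}) n : (size p <= n.+1)%N -> p`_n = 0 -> (size p <= n)%N.
Proof.
move=> H1 H2; apply/leq_sizeP => j; rewrite leq_eqVlt => /orP[/eqP <- //|Hj].
by rewrite nth_default // (leq_trans H1).
Qed.

Lemma dif_small (c : rat) (p : {poly rat}) : (size (dif c p) <= (size p).-1)%N.
Proof. by case: (K1 c p). Qed.

Lemma dif_exact (c : rat) (p : {poly rat}) : c != 0 -> (1 < size p)%N -> size (dif c p) = (size p).-1.
Proof.
move=> c0 sp; apply/eqP; rewrite eqn_leq dif_small /=.
have: (dif c p)`_((size p).-2) != 0.
  case: (K1 c p) => _ ->; rewrite mulNr oppr_eq0 !mulf_neq0 // ?lead_coef_eq0.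
    by rewrite pnatr_eq0 -lt0n -ltnS prednK // ltnW.
  by rewrite -size_poly_eq0 -lt0n ltnW.
move/coef_nz_size; case: (size p) sp => // -[|n] //.
Qed.

Lemma poly_ext (p q : {poly rat}) : (forall x, p.[x] = q.[x]) -> p = q.
Proof.
move=> H; apply/eqP; rewrite -subr_eq0; apply/eqP.
apply: (@roots_geq_poly_eq0 _ _ [seq i%:R | i <- iota 0 (size (p - q))]).
- by apply/allP => x /mapP [i _ ->]; rewrite /root hornerD hornerN H subrr.
- by rewrite map_inj_uniq ?iota_uniq // => i j /eqP; rewrite eqr_nat => /eqP.
- by rewrite size_map size_iota.
Qed.

Lemma altsolve (P : {poly rat}) : exists Q, Q + sh (-1) Q = P /\ size Q = size P.
Proof.
elim: (size P) {-2}P (leqnn (size P)) => [|d IH] {}P sP.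
  move: sP; rewrite leqn0 size_poly_eq0 => /eqP ->.
  by exists 0; rewrite /sh comp_polyC addr0 size_poly0.
have [->|P0] := eqVneq P 0.
  by exists 0; rewrite /sh comp_polyC addr0 size_poly0.
move: sP; rewrite leq_eqVlt ltnS => /orP[/eqP sP|]; last exact: IH.
pose Q1 := (lead_coef P / 2) *: 'X^d.
have l0 : lead_coef P / 2 != 0 by rewrite mulf_neq0 // ?lead_coef_eq0 // invr_eq0.
have sQ1 : size Q1 = d.+1 by rewrite size_scale // size_polyXn.
have Sd : (size (P - (Q1 + sh (-1) Q1))%R <= d)%N.
  apply: size_le_drop.
    apply: (leq_trans (size_polyD _ _)); rewrite geq_max sP size_polyN /=.
    by rewrite ltnSn /=; apply: (leq_trans (size_polyD _ _)); rewrite geq_max size_sh sQ1 leqnn.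
  rewrite coefD coefN coefD.
  have -> : (sh (-1) Q1)`_d = lead_coef Q1 by rewrite -(lead_sh (-1)) lead_coefE size_sh sQ1.
  have -> : Q1`_d = lead_coef Q1 by rewrite lead_coefE sQ1.
  have -> : P`_d = lead_coef P by rewrite lead_coefE sP.
  rewrite /Q1 lead_coefZ lead_coefXn mulr1; by field.
have [Q2 [E2 S2]] := IH _ Sd.
exists (Q1 + Q2); split.
  rewrite shD; rewrite -[RHS](subrK (Q1 + sh (-1) Q1)) -E2; ring.
by rewrite size_polyDl sQ1 // S2 ltnS.
Qed.

Lemma antidiff (B : {poly rat}) : exists D, dif (-1) D = B /\ D.[0] = 0 /\
  size D = (if B == 0 then 0%N else (size B).+1).
Proof.
elim: (size B) {-2}B (leqnn (size B)) => [|d IH] {}B sB.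
  move: sB; rewrite leqn0 size_poly_eq0 => /eqP ->.
  by exists 0; rewrite difC horner0 eqxx size_poly0.
have [->|B0] := eqVneq B 0.
  by exists 0; rewrite difC horner0 size_poly0.
move: sB; rewrite leq_eqVlt ltnS => /orP[/eqP sB|]; last by move=> /IH; rewrite (negPf B0).
pose D1 := (lead_coef B / (d.+1)%:R) *: 'X^(d.+1).
have l0 : lead_coef B / (d.+1)%:R != 0 by rewrite mulf_neq0 // ?lead_coef_eq0 // invr_eq0 pnatr_eq0.
have sD1 : size D1 = d.+2 by rewrite size_scale // size_polyXn.
have Sd : (size (B - dif (-1) D1)%R <= d)%N.
  apply: size_le_drop.
    apply: (leq_trans (size_polyD _ _)); rewrite geq_max sB size_polyN /=.
    by rewrite ltnSn /=; apply: (leq_trans (dif_small _ _)); rewrite sD1.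
  rewrite coefD coefN.
  case: (K1 (-1) D1) => _; rewrite sD1 /= => ->.
  have -> : B`_d = lead_coef B by rewrite lead_coefE sB.
  rewrite /D1 lead_coefZ lead_coefXn mulr1; field.
  by rewrite addrC natr1 pnatr_eq0.
have [D2 [E2 [H2 S2]]] := IH _ Sd.
exists (D1 + D2 - (D1 + D2).[0]%:P); split.
  by rewrite difB difC subr0 difD E2; ring.
split; first by rewrite hornerD hornerN hornerC subrr.
rewrite sB -addrA size_polyDl sD1 //.
apply: (leq_ltn_trans (size_polyD _ _)); rewrite gtn_max size_polyN.
apply/andP; split; last by rewrite (leq_ltn_trans (size_polyC_leq1 _)).
by move: S2; case: ifP => _ ->; rewrite // !ltnS (leq_trans Sd).
Qed.

Lemma alt_uniq (Q : {poly rat}) : Q + sh (-1) Q = 0 -> Q = 0.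
Proof.
move=> H; apply/eqP; apply: contraLR isT => Q0.
have : (Q + sh (-1) Q)`_((size Q).-1) != 0.
  rewrite coefD.
  have -> : (sh (-1) Q)`_((size Q).-1) = lead_coef Q by rewrite -(lead_sh (-1)) lead_coefE size_sh.
  rewrite -lead_coefE.
  rewrite -mulr2n mulrn_eq0 /= lead_coef_eq0 //.
by rewrite H coef0 eqxx.
Qed.

Lemma dif_ker (p : {poly rat}) : dif (-1) p = 0 -> p = (p`_0)%:P.
Proof.
move=> H; apply: size1_polyC; rewrite leqNgt; apply/negP => sp.
have := @dif_exact (-1) p isT sp; rewrite H size_poly0.
by case: (size p) sp => // -[].
Qed.
Lemma iter_sumS s f n : iter_sum s.+1 f n.+1 = iter_sum s.+1 f n + iter_sum s f n.+1.
Proof. by rewrite /= big_nat_recr. Qed.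
Lemma iter_sum0 s f : iter_sum s.+1 f 0 = 0.
Proof. by rewrite /= big_geq. Qed.

Section Main1.
Variable m : nat.
Hypothesis hm : (0 < m)%N.
Definition f := (fun i : nat => (-1) ^+ i * (i%:R : rat) ^+ (2 * m)).
End Main1.
Definition L (u : nat -> rat) n := u n.+1 + u n.

Lemma killL j : forall (u : nat -> rat) (A : {poly rat}) c,
  (forall n, u n = (-1)^+n * A.[n%:R] + c) ->
  forall n, iter j L u n = (-1)^+n * (iter j (dif 1) A).[n%:R] + 2^+j * c.
Proof.
move=> u A c H; elim: j => [|j IH] n; first by rewrite /= H expr0 mul1r.
rewrite !iterS /L !IH hdif -natr1 !exprS; ring.
Qed.

Lemma size_iter_dif j (A : {poly rat}) : (size (iter j (dif 1) A) <= size A - j)%N.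
Proof.
elim: j => [|j IH]; first by rewrite subn0.
rewrite iterS (leq_trans (dif_small _ _)) //.
by rewrite subnS; move: IH; set a := size _; set b := (_ - _)%N; lia.
Qed.

Definition cong3 (x : rat) (e : int) := exists z : int, x = (3 * z + e)%:~R.

Lemma cong3_add x y a b : cong3 x a -> cong3 y b -> cong3 (x + y) (a + b).
Proof. by move=> [z ->] [w ->]; exists (z + w); rewrite -rmorphD /=; congr (_%:~R); ring. Qed.

Lemma cong3_mul3 x a : cong3 x a -> cong3 (3 * x) 0.
Proof. by move=> [z ->]; exists (3 * z + a); rewrite addr0 rmorphM /=. Qed.

Lemma cong3_sh x a c : cong3 x (a + 3 * c) -> cong3 x a.
Proof. by move=> [z ->]; exists (z + c); congr (_%:~R); ring. Qed.

Lemma cong3_nz x e : (e = 1 \/ e = -1) -> cong3 x e -> x != 0.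
Proof.
move=> He [z ->]; rewrite intr_eq0; apply/eqP => H.
by case: He => He; subst e; lia.
Qed.

Section M3.
Variable m : nat.
Hypothesis hm : (0 < m)%N.

Definition phi (j : nat) : int := (-1)^+(odd j) * (nat_of_bool ((j %% 3)%N != 0%N))%:Z.

Lemma sq3 a : (a < 3)%N -> (a ^ (2 * m) %% 3 = nat_of_bool (a != 0%N))%N.
Proof.
case: a => [|[|[|]]] // _.
- by rewrite exp0n // muln_gt0 hm.
- by rewrite exp1n.
- by rewrite expnM -modnXm /= exp1n.
Qed.

Lemma f_cong i : cong3 (f m i) (phi (i %% 6)%N).
Proof.
rewrite /f /phi -signr_odd -natrX.
have -> : odd i = odd (i %% 6) by rewrite {1}(divn_eq i 6) oddD oddM /= andbF.
have -> : ((i %% 6) %% 3 = i %% 3)%N by rewrite modn_dvdm.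
rewrite (divn_eq (i ^ (2 * m)) 3) -modnXm sq3 ?ltn_pmod //.
exists ((-1)^+(odd (i %% 6)) * ((i ^ (2 * m)) %/ 3)%N%:Z).
rewrite natrD natrM rmorphD /= !rmorphM /= rmorphXn /= rmorphN1.
ring.
Qed.

Definition sgm (j : nat) : int := match j with 1 => -1 | 4 => 1 | _ => 0 end.
Definition tau (j : nat) : int := match j with 1 | 2 | 3 => -1 | _ => 0 end.

Lemma modS6 n : (n.+1 %% 6 = (n %% 6).+1 %% 6)%N.
Proof. by rewrite -addn1 -modnDml addn1. Qed.

Lemma pat n : cong3 (iter_sum 1 (f m) n) (sgm (modn n 6)) /\ cong3 (iter_sum 2 (f m) n) (tau (modn n 6)).
Proof.
elim: n => [|n [IH1 IH2]].
  by rewrite !iter_sum0; split; exists 0.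
have H1 := cong3_add IH1 (f_cong n.+1).
have E1 : sgm (modn n.+1 6) = sgm (modn n 6) + phi (modn n.+1 6).
  rewrite modS6; have : (n %% 6 < 6)%N by rewrite ltn_pmod.
  by case: (modn n 6) => [|[|[|[|[|[|]]]]]].
have e1 : iter_sum 1 (f m) n.+1 = iter_sum 1 (f m) n + f m n.+1 := iter_sumS 0 _ n.
have e2 : iter_sum 2 (f m) n.+1 = iter_sum 2 (f m) n + iter_sum 1 (f m) n.+1 := iter_sumS 1 _ n.
have H2 := cong3_add IH2 H1.
rewrite e2 e1 E1; split => //.
have E2 : tau (modn n.+1 6) = tau (modn n 6) + (sgm (modn n 6) + phi (modn n.+1 6)).
  rewrite modS6; have : (n %% 6 < 6)%N by rewrite ltn_pmod.
  by case: (modn n 6) => [|[|[|[|[|[|]]]]]].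
by rewrite E2.
Qed.

Lemma L3E (w : nat -> rat) n : iter 3 L w n = w n.+3 + 3 * w n.+2 + 3 * w n.+1 + w n.
Proof. rewrite /= /L; ring. Qed.

Lemma iterL3 k : (0 < k)%N -> exists e : int, (e = 1 \/ e = -1) /\
  forall n, cong3 (iter (3 * k) L (iter_sum 2 (f m)) n) e.
Proof.
elim: k => [|[|k] IH] // _.
  exists (-1); split; first by right.
  move=> n; rewrite muln1 L3E.
  have T : tau (modn n.+3 6) + 0 + 0 + tau (modn n 6) = -1.
    rewrite -addn3 -modnDml; have : (n %% 6 < 6)%N by rewrite ltn_pmod.
    by case: (n %% 6)%N => [|[|[|[|[|[|]]]]]].
  rewrite -T; apply: cong3_add; last exact: (pat n).2.
  apply: cong3_add; last exact: (cong3_mul3 (pat n.+1).2).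
  apply: cong3_add; last exact: (cong3_mul3 (pat n.+2).2).
  exact: (pat n.+3).2.
have [e [He Hc]] := IH isT.
exists (- e); split; first by case: He => ->; [right|left].
move=> n; rewrite mulnS iterD L3E.
apply: (@cong3_sh _ _ e).
have -> : - e + 3 * e = e + 0 + 0 + e by ring.
apply: cong3_add; last exact: Hc.
apply: cong3_add; last exact: (cong3_mul3 (Hc _)).
apply: cong3_add; last exact: (cong3_mul3 (Hc _)).
exact: Hc.
Qed.

Lemma nz2 (A : {poly rat}) b :
  (forall n, iter_sum 2 (f m) n = (-1)^+n * A.[n%:R] + b) -> b != 0.
Proof.
move=> H; have [e [He Hc]] := iterL3 (ltn0Sn (size A)).
have K := killL (3 * (size A).+1) H 0.
have Z : iter (3 * (size A).+1) (dif 1) A = 0.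
  apply/eqP; rewrite -size_poly_eq0 -leqn0.
  by apply: (leq_trans (size_iter_dif _ _)); rewrite leqn0 subn_eq0; lia.
apply/eqP => b0; move: (cong3_nz He (Hc 0%N)); rewrite K Z b0 horner0 !mulr0 addr0 eqxx.
by [].
Qed.
End M3.
Section Main.
Variable m : nat.
Hypothesis hm : (0 < m)%N.

Lemma main_ind s : exists A B : {poly rat},
 [/\ forall n, iter_sum s (f m) n = (-1)^+n * A.[n%:R] + B.[n%:R],
     forall x, A.[- s%:R - x] = A.[x],
     forall x, B.[- s%:R - x] = (-1)^+s * B.[x],
     forall j, (j <= s)%N -> (-1)^+j * A.[- j%:R] + B.[- j%:R] = 0
   & (size A = (2 * m).+1 /\ size B = s.-1)%N].
Proof.
elim: s => [|s [A [B [Ha Hc1 Hc2 He [Hd Hg]]]]].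
  exists ('X^(2 * m)), 0; split.
  - by move=> n; rewrite /= horner0 addr0 hornerXn.
  - by move=> x; rewrite !hornerXn oppr0 sub0r exprM sqrrN -exprM.
  - by move=> x; rewrite !horner0 mulr0.
  - move=> j; rewrite leqn0 => /eqP ->; rewrite horner0 addr0 hornerXn oppr0 expr0n.
    by rewrite muln_eq0 /= eqn0Ngt hm mulr0.
  - by rewrite size_polyXn size_poly0.
have [A' [EA SA]] := altsolve A.
have eA x : A'.[x] + A'.[x - 1] = A.[x].
  by rewrite -EA hornerD hsh.
have [D [ED [D0 SD]]] := antidiff B.
pose B' := D - (A'.[0])%:P.
have eB x : B'.[x] - B'.[x - 1] = B.[x].
  by rewrite -ED hdif /B' !hornerD !hornerN !hornerC; ring.
have Ha' n : iter_sum s.+1 (f m) n = (-1)^+n * A'.[n%:R] + B'.[n%:R].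
  elim: n => [|n IHn]; first by rewrite iter_sum0 expr0 mul1r /B' hornerD hornerN hornerC D0; ring.
  rewrite iter_sumS IHn Ha.
  have := eA n.+1%:R; have := eB n.+1%:R; rewrite -natr1 addrK exprS => e1 e2.
  rewrite -e1 -e2; ring.
have He' j : (j <= s.+1)%N -> (-1)^+j * A'.[- j%:R] + B'.[- j%:R] = 0.
  elim: j => [|j IHj] Hj.
    by rewrite mulr0n oppr0 expr0 mul1r /B' hornerD hornerN hornerC D0; ring.
  have := He j Hj; have := IHj (ltnW Hj).
  have := eA (- j%:R); have := eB (- j%:R).
  rewrite -natr1 opprD exprS => e1 e2 e3 e4.
  rewrite -e1 -e2 in e4.
  transitivity (((-1)^+j * A'.[- j%:R] + B'.[- j%:R]) - ((-1)^+j * (A'.[- j%:R] + A'.[- j%:R - 1]) + (B'.[- j%:R] - B'.[- j%:R - 1]))); first by ring.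
  by rewrite e3 e4 subr0.
have sg2 k : (-1)^+k * (-1)^+k = 1 :> rat by rewrite -exprMn mulN1r opprK expr1n.
pose At := A' \Po ((- (s.+1)%:R)%:P - 'X).
have hAt x : At.[x] = A'.[- (s.+1)%:R - x] by rewrite horner_comp !hornerE.
have EAt : At + sh (-1) At = A.
  apply: poly_ext => x; rewrite hornerD hsh !hAt.
  have e1 : - (s.+1)%:R - (x + -1) = - s%:R - x :> rat by rewrite -natr1; ring.
  have e2 : - (s.+1)%:R - x = - s%:R - x - 1 :> rat by rewrite -natr1; ring.
  by rewrite e1 e2 addrC eA Hc1.
have At_eq : At = A'.
  apply/eqP; rewrite -subr_eq0; apply/eqP; apply: alt_uniq.
  have -> : sh (-1) (At - A') = sh (-1) At - sh (-1) A' by rewrite /sh comp_polyB.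
  transitivity ((At + sh (-1) At) - (A' + sh (-1) A')); first by ring.
  by rewrite EAt EA subrr.
have Hc1' x : A'.[- (s.+1)%:R - x] = A'.[x] by rewrite -hAt At_eq.
pose Bt := (-1)^+(s.+1) *: (B' \Po ((- (s.+1)%:R)%:P - 'X)).
have hBt x : Bt.[x] = (-1)^+(s.+1) * B'.[- (s.+1)%:R - x] by rewrite hornerZ horner_comp !hornerE.
have dBt : dif (-1) Bt = B.
  apply: poly_ext => x; rewrite hdif !hBt.
  have e1 : - (s.+1)%:R - (x + -1) = - s%:R - x :> rat by rewrite -natr1; ring.
  have e2 : - (s.+1)%:R - x = - s%:R - x - 1 :> rat by rewrite -natr1; ring.
  rewrite e1 e2; have := eB (- s%:R - x); rewrite Hc2 => e3.
  transitivity (- (-1)^+(s.+1) * (B'.[- s%:R - x] - B'.[- s%:R - x - 1])); first by ring.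
  by rewrite e3 exprS mulN1r opprK mulrA sg2 mul1r.
have dB' : dif (-1) B' = B by rewrite /B' difB difC subr0.
pose E := Bt - B'.
have dE : dif (-1) E = 0 by rewrite /E difB dBt dB' subrr.
have Em1 : E.[-1] = 0.
  rewrite /E hornerD hornerN hBt.
  have e1 : - (s.+1)%:R - -1 = - s%:R :> rat by rewrite -natr1; ring.
  have := He' 1%N isT; have := He' s (leqnSn s); have := Hc1' (-1).
  rewrite e1 expr1 mulN1r => e2 e3 e4.
  have -> : B'.[-1] = A'.[-1] by rewrite -[LHS]subr0 -e4; ring.
  have -> : B'.[- s%:R] = - (-1)^+s * A'.[-1] by rewrite -[LHS]subr0 -e3 e2; ring.
  have -> : (-1) ^+ s.+1 * (- (-1) ^+ s * A'.[-1]) = ((-1)^+s * (-1)^+s) * A'.[-1] by rewrite exprS; ring.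
  by rewrite sg2 mul1r subrr.
have E0 x : E.[x] = 0.
  by move: Em1; rewrite (dif_ker dE) !hornerC.
have Hc2' x : B'.[- (s.+1)%:R - x] = (-1)^+(s.+1) * B'.[x].
  have := E0 x; rewrite /E hornerD hornerN hBt => /eqP; rewrite subr_eq0 => /eqP <-.
  by rewrite mulrA sg2 mul1r.
exists A', B'; split => //; rewrite SA Hd; split => //.
case: s Ha Hc1 Hc2 He Hg Ha' Hc1' Hc2' He' At hAt EAt At_eq Bt hBt dBt E dE Em1 E0 => [|[|s]] Ha Hc1 Hc2 He Hg Ha' Hc1' Hc2' He' At hAt EAt At_eq Bt hBt dBt E dE Em1 E0 /=.
- move: Hg => /eqP; rewrite size_poly_eq0 => /eqP B0.
  move: SD; rewrite B0 eqxx => /eqP; rewrite size_poly_eq0 => /eqP D0'.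
  have cB : B' = (- A'.[0])%:P by rewrite /B' D0' sub0r polyCN.
  have := Hc2' 0; rewrite cB !hornerC expr1 mulN1r => /eqP.
  rewrite -subr_eq0 opprK -mulr2n mulrn_eq0 /= => /eqP ->.
  by rewrite size_poly0.
- move: Hg => /eqP; rewrite size_poly_eq0 => /eqP B0.
  move: SD; rewrite B0 eqxx => /eqP; rewrite size_poly_eq0 => /eqP D0'.
  have cB : B' = (- A'.[0])%:P by rewrite /B' D0' sub0r polyCN.
  rewrite cB size_polyC.
  suff -> : - A'.[0] != 0 by [].
  apply: (nz2 hm (A := A')) => n; rewrite Ha' cB hornerC //.
- have B0 : B != 0 by rewrite -size_poly_eq0 Hg.
  rewrite /B' size_polyDl SD (negPf B0) Hg //.
  by rewrite size_polyN (leq_ltn_trans (size_polyC_leq1 _)).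
Qed.
End Main.
Lemma even_sym (P : {poly rat}) (k : rat) : (forall x, P.[-k - x] = P.[x]) ->
  odd (size P) -> exists F : {poly rat}, size F = uphalf (size P) /\ forall x, P.[x] = F.[x * (x + k)].
Proof.
move=> HP oP.
pose h := k / 2.
pose Q := P \Po ('X - h%:P).
have hQ y : Q.[y] = P.[y - h] by rewrite horner_comp !hornerE.
have sQ : size Q = size P by rewrite size_comp_poly2 // size_XsubC.
have Qe y : Q.[- y] = Q.[y].
  by rewrite !hQ -HP; congr (P.[_]); rewrite /h; field.
have dQ y : Q.[y] = (even_poly Q).[y ^+ 2] + (odd_poly Q).[y ^+ 2] * y.
  by rewrite -{1}(poly_even_odd Q) hornerD hornerM !horner_comp !hornerE.
have Ez y : Q.[y] = (even_poly Q).[y ^+ 2].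
  have := dQ (- y); rewrite Qe sqrrN dQ => /eqP.
  rewrite -subr_eq0 => /eqP H.
  have : 2 * ((odd_poly Q).[y ^+ 2] * y) = 0 by rewrite -[RHS]H; ring.
  move/eqP; rewrite mulf_eq0 pnatr_eq0 /= => /eqP ->; rewrite addr0 //.
exists (even_poly Q \Po ('X + (h ^+ 2)%:P)); split.
  by rewrite size_comp_poly2 ?size_XaddC // size_even_poly_eq sQ.
move=> x; rewrite horner_comp !hornerE.
have -> : P.[x] = Q.[x + h] by rewrite hQ addrK.
rewrite Ez; congr (_.[_]); by rewrite /h; field.
Qed.

Theorem mainTheorem6 (r m : nat) (hr : (0 < r)%N) (hm : (0 < m)%N) :
  exists F G : {poly rat},
    size F = m.+1 /\ size G = r /\
    forall n : nat, (0 < n)%N ->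
      iter_sum (2 * r) (fun i => (-1) ^+ i * (i%:R) ^+ (2 * m)) n =
      (-1) ^+ n * F.[(n * (n + 2 * r))%:R] + G.[(n * (n + 2 * r))%:R].
Proof.
have [A [B [Ha Hc1 Hc2 He [Hd Hg]]]] := main_ind hm (2 * r).
have oA : odd (size A) by rewrite Hd /= oddM.
clear He; case: r hr Hc1 Hc2 Ha Hg => // r' _ Hc1 Hc2 Ha Hg.
have oB : odd (size B) by rewrite Hg mulnS /= oddM.
have [F [SF HF]] := even_sym Hc1 oA.
have Hc2' x : B.[- (2 * r'.+1)%:R - x] = B.[x].
  by rewrite Hc2 exprM sqrrN expr1n mul1r.
have [G [SG HG]] := even_sym Hc2' oB.
exists F, G; split; first by rewrite SF Hd /= mul2n doubleK.
split; first by rewrite SG Hg mulnS /= mul2n doubleK.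
move=> n _; rewrite Ha HF HG -natrD -natrM //.
Qed.
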